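(* Let $X$ be a topological space and $x\in X$. Then $\mathrm{cl}_\theta(\{x\})$ equals the union of all finitely non-Hausdorff subsets of $X$ containing $x$, and also equals the union of all maximal finitely non-Hausdorff subsets of $X$ containing $x$.
   Context: For $A\subseteq X$, $\mathrm{cl}_\theta(A):=\{y\in X:\ \overline{B}\cap A\neq\emptyset$ for every open neighborhood $B$ of $y\}$. A non-empty subset $A$ of $X$ is finitely non-Hausdorff if for every non-empty finite $F\subseteq A$ and every family $\{U_y:y\in F\}$ of open neighborhoods $U_y$ of $y$, $\bigcap_{y\in F}U_y\neq\emptyset$; it is maximal finitely non-Hausdorff if no finitely non-Hausdorff subset of $X$ properly contains it. *)

(* Defs.v *)
From HB Require Import structures.
From mathcomp Require Import all_boot all_order all_algebra.
From mathcomp Require Import all_classical all_reals all_analysis.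
Set Implicit Arguments. Unset Strict Implicit. Unset Printing Implicit Defensive.
Local Open Scope classical_set_scope.

Definition theta_closure (X : topologicalType) (A : set X) : set X :=
  [set y | forall B : set X, open B -> B y -> closure B `&` A !=set0].

Definition finitely_nonHausdorff (X : topologicalType) (A : set X) : Prop :=
  A !=set0 /\
  forall (F : set X) (U : X -> set X),
    finite_set F -> F !=set0 -> F `<=` A ->
    (forall y, F y -> open (U y) /\ U y y) ->
    \bigcap_(y in F) U y !=set0.

Definition maximal_finitely_nonHausdorff (X : topologicalType) (A : set X) : Prop :=
  finitely_nonHausdorff A /\
  forall B : set X, finitely_nonHausdorff B -> A `<=` B -> B = A.

(* Main.v *)
Require Import Defs.
From HB Require Import structures.
From mathcomp Require Import all_boot all_order all_algebra.
From mathcomp Require Import all_classical all_reals all_analysis.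
Local Open Scope classical_set_scope.

Lemma thetaP (X : topologicalType) (x y : X) :
  theta_closure [set x] y <->
  (forall B V : set X, open B -> B y -> open V -> V x -> B `&` V !=set0).
Proof.
split.
- move=> H B V oB By oV Vx.
  have [z [cz zx]] := H B oB By; rewrite zx in cz.
  apply: cz; apply: open_nbhs_nbhs; by split.
- move=> H B oB By; exists x; split => //.
  move=> W; rewrite nbhsE => -[V [oV Vx] VW].
  have [z [Bz Vz]] := H B V oB By oV Vx.
  by exists z; split => //; apply: VW.
Qed.

Lemma pair_fin (X : topologicalType) (x y : X) : finite_set [set x; y].
Proof.
apply/finite_seqP; exists [:: x; y]; apply/seteqP; split => z /=.
- by case => ->; rewrite !inE eqxx ?orbT.
- rewrite !inE; by case/orP => /eqP ->; [left|right].
Qed.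

Lemma pair_fnH (X : topologicalType) (x y : X) :
  theta_closure [set x] y -> finitely_nonHausdorff [set x; y].
Proof.
move=> /thetaP H; split; first by exists x; left.
move=> F U _ _ FA HU.
have [Fx|nFx] := pselect (F x); last first.
  exists y => w Fw; have [wx|wy] := FA w Fw; first by rewrite wx in Fw.
  move: Fw; rewrite wy => Fw; exact: (HU y Fw).2.
have [Fy|nFy] := pselect (F y); last first.
  exists x => w Fw; have [wx|wy] := FA w Fw; first by move: Fw; rewrite wx => Fw; exact: (HU x Fw).2.
  by rewrite wy in Fw.
have [oUy Uyy] := HU y Fy; have [oUx Uxx] := HU x Fx.
have [z [Uyz Uxz]] := H _ _ oUy Uyy oUx Uxx.
by exists z => w Fw; have [|] := FA w Fw => ->.
Qed.

Lemma fnH_theta (X : topologicalType) (A : set X) (x y : X) :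
  finitely_nonHausdorff A -> A x -> A y -> theta_closure [set x] y.
Proof.
move=> [_ H] Ax Ay; apply/thetaP => B V oB By oV Vx.
have [yx|nyx] := eqVneq y x; first by exists x; split => //; rewrite -yx.
pose U := fun w : X => if w == x then V else B.
have [||||z Hz] := H [set x; y] U.
- exact: pair_fin.
- by exists x; left.
- by move=> w [->|->].
- move=> w [->|->]; rewrite /U; first by rewrite eqxx.
  by case: eqP => [->|].
- exists z; split.
  + by have := Hz y (or_intror erefl); rewrite /U (negbTE nyx).
  + by have := Hz x (or_introl erefl); rewrite /U eqxx.
Qed.

Lemma chain_seq (X : topologicalType) (C : set (set X)) (Y0 : set X) (s : seq X) :
  total_on C subset -> C Y0 ->
  (forall z, z \in s -> exists2 Y, C Y & Y z) ->
  exists2 Y, C Y & [set` s] `<=` Y.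
Proof.
move=> tot CY0; elim: s => [|a s IH] Hs.
  by exists Y0 => // z /=; rewrite in_nil.
have [Y1 CY1 Y1a] := Hs a (mem_head _ _).
have [|Y2 CY2 sY2] := IH.
  by move=> z zs; apply: Hs; rewrite in_cons zs orbT.
have [Y12|Y21] := tot _ _ CY1 CY2.
- exists Y2 => // z /=; rewrite in_cons => /orP[/eqP->|zs]; first exact: Y12.
  exact: sY2.
- exists Y1 => // z /=; rewrite in_cons => /orP[/eqP->|zs] //.
  by apply: Y21; exact: sY2.
Qed.

Lemma extend_max (X : topologicalType) (A0 : set X) :
  finitely_nonHausdorff A0 ->
  exists A, maximal_finitely_nonHausdorff A /\ A0 `<=` A.
Proof.
move=> fA0.
have [a0 A0a0] := fA0.1.
pose P := [set B : set X | B = set0 \/ (finitely_nonHausdorff B /\ A0 `<=` B)].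
have [|A [PA maxA]] := @Zorn_bigcup X P.
  move=> F FP tot.
  have [[Y0 FY0 nY0]|] := pselect (exists2 Y, F Y & Y !=set0); last first.
    move=> nF; left; apply/seteqP; split => // z [Y FY Yz].
    by exfalso; apply: nF; exists Y => //; exists z.
  have [Y0e|[fY0 A0Y0]] := FP _ FY0; first by rewrite Y0e in nY0; case: nY0.
  right; split; last by move=> z A0z; exists Y0 => //; apply: A0Y0.
  split; first by exists a0; exists Y0 => //; apply: A0Y0.
  move=> G U finG nG GU HU.
  have [s Gs] := (finite_seqP G).1 finG.
  have [|Y FY sY] := @chain_seq X F Y0 s tot FY0.
    move=> z zs; have : G z by rewrite Gs.
    by move=> /GU [Y FY Yz]; exists Y.
  have GY : G `<=` Y by rewrite Gs.
  have [Ye|[fY _]] := FP _ FY.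
    by exfalso; have [g Gg] := nG; have := GY g Gg; rewrite Ye.
  exact: fY.2.
have [Ae|[fA A0A]] := PA.
  exfalso; apply: (maxA A0); last by right; split.
  rewrite Ae; split => // H; have := H a0 A0a0; done.
exists A; split => //; split => // B fB AB.
apply: contrapT => BA; apply: (maxA B); last by right; split => //; apply: subset_trans AB.
split => // BA'; apply: BA; by apply/seteqP; split.
Qed.

Theorem corollary2p13 (X : topologicalType) (x : X) :
  theta_closure [set x] =
    \bigcup_(A in [set A : set X | finitely_nonHausdorff A /\ A x]) A /\
  theta_closure [set x] =
    \bigcup_(A in [set A : set X | maximal_finitely_nonHausdorff A /\ A x]) A.
Proof.
split; apply/seteqP; split.
- move=> y Hy; exists [set x; y]; last by right.
  by split; [exact: (@pair_fnH _ x y Hy) | left].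
- by move=> y [A [fA Ax] Ay]; exact: (@fnH_theta _ A x y fA Ax Ay).
- move=> y Hy; have [A [mA sA]] := @extend_max _ _ (@pair_fnH _ x y Hy).
  by exists A; [split => //; apply: sA; left | apply: sA; right].
- by move=> y [A [[fA _] Ax] Ay]; exact: (@fnH_theta _ A x y fA Ax Ay).
Qed.
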